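(* Let $N\ge1$, $K\ge1$, $n_v\ge0$. Let $\mathbf{T}^{(1)},\mathbf{T}^{(2)}\in[0,1]^{K\times K}$ be irreducible aperiodic row-stochastic matrices, let $\mathbf{P}_1,\mathbf{P}_2$ be the corresponding global transition matrices and $\pi_1,\pi_2$ their stationary distributions (row vectors in $\mathbb{R}^{K^N}$). Then $\|\mathbf{P}_1-\mathbf{P}_2\|_1\le NK^{N-1}\min\{\|\mathbf{T}^{(1)}-\mathbf{T}^{(2)}\|_1,\;K\|\mathbf{T}^{(1)}-\mathbf{T}^{(2)}\|_{1,1}\}$ and $\|\mathbf{P}_1-\mathbf{P}_2\|_2\le N(KC_K)^{N/2}\|\mathbf{T}^{(1)}-\mathbf{T}^{(2)}\|_2$, where $C_K:=\max\{\max_{j\in[K]}\sum_{k\in[K]}(\mathbf{T}^{(1)}_{j,k})^2,\max_{j\in[K]}\sum_{k\in[K]}(\mathbf{T}^{(2)}_{j,k})^2\}\le1$. Also, there exists $\ell_0\in\mathbb{N}$ such that $\tau(\mathbf{P}_1^{\ell_0})<1$ and $\|\pi_1-\pi_2\|_1\le\frac{1+(\ell_0-1)K^N}{1-\tau(\mathbf{P}_1^{\ell_0})}\|\mathbf{P}_1-\mathbf{P}_2\|_1\le\frac{1+(\ell_0-1)K^N}{1-\tau(\mathbf{P}_1^{\ell_0})}NK^{N-1}\min\{\|\mathbf{T}^{(1)}-\mathbf{T}^{(2)}\|_1,\;K\|\mathbf{T}^{(1)}-\mathbf{T}^{(2)}\|_{1,1}\}$.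
   Context: Vertices $[N]=\{1,\dots,N\}$ are arranged on a cycle; for $n\in[N]$, $V_n\subset[N]$ is the set of residues modulo $N$ of $n-n_v,\dots,n+n_v$, and $|V_n|$ its cardinality. The global transition matrix associated with a row-stochastic $\mathbf{T}$ is $\mathbf{P}(x,y)=\prod_{n=1}^N \frac{1}{|V_n|}\sum_{i\in V_n}\mathbf{T}_{x_i,y_n}$, $x,y\in[K]^N$. For a matrix $\mathbf{A}$, $\|\mathbf{A}\|_p=(\sum_{i,j}|\mathbf{A}_{ij}|^p)^{1/p}$ (entrywise $\ell_p$ norm, also for vectors), and $\|\mathbf{A}\|_{1,1}=\sup_{\|\varphi\|_1\le1}\|\varphi\mathbf{A}\|_1$, the supremum over row vectors $\varphi$. For a stochastic matrix $\mathbf{A}$, $\tau(\mathbf{A}):=\frac12\max_{x,x'}\|\mathbf{A}(x,\cdot)-\mathbf{A}(x',\cdot)\|_1$. *)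

(* Defs.v *)
From HB Require Import structures.
From mathcomp Require Import all_boot all_order all_algebra.
From mathcomp Require Import classical_sets reals.
Set Implicit Arguments. Unset Strict Implicit. Unset Printing Implicit Defensive.
Import Order.TTheory GRing.Theory Num.Theory.
Local Open Scope ring_scope.
Local Open Scope classical_set_scope.

Section Defs.
Variable R : realType.

Definition row_stochastic (K : nat) (T : 'M[R]_K) : Prop :=
  (forall j k, 0 <= T j k) /\ (forall j, \sum_k T j k = 1).

Definition irreducible (K : nat) (T : 'M[R]_K) : Prop :=
  forall j k, exists m : nat, 0 < (T ^+ m) j k.

(** Aperiodic: every state has period 1, i.e. the gcd of the return
    times {m >= 1 | T^m(i,i) > 0} is 1 (only d = 1 divides all of them). *)
Definition aperiodic (K : nat) (T : 'M[R]_K) : Prop :=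
  forall i (d : nat),
    (forall m : nat, (0 < m)%N -> 0 < (T ^+ m) i i -> (d %| m)%N) -> d = 1%N.

Definition config (N K : nat) := {ffun 'I_N -> 'I_K}.

(** Neighbourhood V_n on the cycle (0-based indices): residues mod N of
    n - nv, ..., n + nv, i.e. i with i = n + d - nv (mod N), 0 <= d <= 2nv. *)
Definition nbhd (N nv : nat) (n : 'I_N) : {set 'I_N} :=
  [set i : 'I_N | [exists d : 'I_(nv.*2).+1, (i + nv == n + d %[mod N])%N]].

Definition globalP (N K nv : nat) (T : 'M[R]_K) (x y : config N K) : R :=
  \prod_(n : 'I_N)
    ((#|nbhd nv n|%:R)^-1 * \sum_(i in nbhd nv n) T (x i) (y n)).

Definition mulF (I : finType) (A B : I -> I -> R) : I -> I -> R :=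
  fun x y => \sum_z A x z * B z y.
Definition idF (I : finType) : I -> I -> R :=
  fun x y => (x == y)%:R.
Definition powF (I : finType) (A : I -> I -> R) (l : nat) : I -> I -> R :=
  iter l (mulF A) (@idF I).

Definition norm1 (I J : finType) (A : I -> J -> R) : R :=
  \sum_i \sum_j `|A i j|.
Definition norm2 (I J : finType) (A : I -> J -> R) : R :=
  Num.sqrt (\sum_i \sum_j (A i j) ^+ 2).
Definition vnorm1 (I : finType) (v : I -> R) : R := \sum_i `|v i|.

Definition norm11 (I J : finType) (A : I -> J -> R) : R :=
  sup [set vnorm1 (fun j => \sum_i phi i * A i j)
      | phi in [set phi : I -> R | vnorm1 phi <= 1]].

Definition tau (I : finType) (A : I -> I -> R) : R :=
  2^-1 * \big[Num.max/0]_(x : I) \big[Num.max/0]_(x' : I)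
           \sum_y `|A x y - A x' y|.

Definition stationary (I : finType) (P : I -> I -> R) (pi : I -> R) : Prop :=
  (forall x, 0 <= pi x) /\ \sum_x pi x = 1 /\
  (forall y, \sum_x pi x * P x y = pi y).

Definition rowsq (K : nat) (T : 'M[R]_K) : R :=
  \big[Num.max/0]_(j : 'I_K) \sum_(k : 'I_K) (T j k) ^+ 2.

End Defs.
Arguments globalP {R} N {K} nv T x y.

(* Main.v *)
Require Import Defs.
From HB Require Import structures.
From mathcomp Require Import all_boot all_order all_algebra.
From mathcomp Require Import classical_sets reals boolp zify ring lra.
Import Order.TTheory GRing.Theory Num.Theory.
Local Open Scope ring_scope.
Section Prim.
Variable R : realType.
Variable K : nat.
Variable T : 'M[R]_K.
Hypothesis Tnn : forall j k, 0 <= T j k.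

Lemma mx_mulE (A B : 'M[R]_K) i j : (A * B) i j = \sum_k A i k * B k j.
Proof. by rewrite -mulmxE mxE. Qed.

Lemma mx1E i j : (1 : 'M[R]_K) i j = (i == j)%:R.
Proof. by rewrite mxE. Qed.

Lemma powT_ge0 m i j : 0 <= (T ^+ m) i j.
Proof.
elim: m i j => [|m IH] i j; first by rewrite expr0 mx1E ler0n.
rewrite exprS mx_mulE; apply: sumr_ge0 => k _; exact: mulr_ge0.
Qed.

Lemma sum_ge_term (I : finType) (F : I -> R) k :
  (forall i, 0 <= F i) -> F k <= \sum_i F i.
Proof.
move=> H; rewrite (bigD1 k) //= lerDl; exact: sumr_ge0.
Qed.

Lemma powT_mul a b i k j : (T^+a) i k * (T^+b) k j <= (T^+(a+b)) i j.
Proof.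
rewrite exprD mx_mulE; apply: (@sum_ge_term _ (fun k => (T ^+ a) i k * (T ^+ b) k j) k).
move=> z; exact: mulr_ge0 (powT_ge0 _ _ _) (powT_ge0 _ _ _).
Qed.

Lemma powT_pos_add {a b i k j} : 0 < (T^+a) i k -> 0 < (T^+b) k j -> 0 < (T^+(a+b)) i j.
Proof.
move=> Ha Hb; apply: lt_le_trans (powT_mul a b i k j); exact: mulr_gt0.
Qed.

Lemma powT_pos_mul {q a i} : 0 < (T^+a) i i -> 0 < (T^+(q * a)) i i.
Proof.
move=> Ha; elim: q => [|q IH]; first by rewrite mul0n expr0 mx1E eqxx ltr01.
rewrite mulSn; exact: powT_pos_add Ha IH.
Qed.

Lemma period_one i : aperiodic T ->
  exists b, 0 < (T^+b) i i /\ 0 < (T^+(b.+1)) i i.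
Proof.
move=> Hap.
pose Pos m := 0 < (T^+m) i i.
have P0 : Pos 0%N by rewrite /Pos expr0 mx1E eqxx ltr01.
have Hdiv : forall d, (forall s, Pos s -> (d %| s)%N) -> d = 1%N.
  move=> d H; apply: (Hap i d) => m _ Hm; exact: H.
have key : forall d, (0 < d)%N -> (exists b, Pos b /\ Pos (b + d)%N) ->
    exists b, Pos b /\ Pos (b.+1).
  elim/ltn_ind => d IH d0 [b [Hb Hbd]].
  have [Ed|d1] := eqVneq d 1%N; first by exists b; rewrite -addn1 -Ed.
  have [s [Hs Hnd]] : exists s, Pos s /\ ~~ (d %| s)%N.
    apply: contrapT => Hn; apply: (negP d1); apply/eqP; apply: Hdiv => s Hs.
    apply: contrapT => Hns; apply: Hn; exists s; split => //; exact/negP.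
  have r0 : (0 < s %% d)%N by rewrite lt0n; exact: Hnd.
  apply: (IH (s %% d)%N _ r0); first by rewrite ltn_pmod.
  exists ((s %/ d) * (b + d))%N; split; first by rewrite /Pos in Hbd *; exact: powT_pos_mul.
  have -> : ((s %/ d) * (b + d) + s %% d)%N = (s + (s %/ d) * b)%N.
    by rewrite mulnDr -addnA -divn_eq addnC.
  rewrite /Pos in Hs Hb *; exact: powT_pos_add Hs (powT_pos_mul Hb).
have [s [s0 Hs]] : exists s, (0 < s)%N /\ Pos s.
  apply: contrapT => Hn.
  suff : (0 = 1)%N by [].
  apply: (Hdiv 0%N) => s Hs; case: s Hs => [|s] Hs //; exfalso; apply: Hn.
  by exists s.+1.
apply: (key s s0); exists 0%N; split => //.
Qed.

Lemma eventually_pos i : aperiodic T ->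
  exists M, forall m, (M <= m)%N -> 0 < (T^+m) i i.
Proof.
move=> Hap; have [b [Hb Hb1]] := period_one i Hap.
exists (b * b)%N => m Hm.
case: (posnP b) => [b0|bpos].
  by move: Hb1; rewrite b0 => H1; rewrite -(muln1 m); apply: powT_pos_mul.
have Hq : (m %% b < m %/ b)%N.
  apply: (leq_trans (ltn_pmod m bpos)); by rewrite leq_divRL.
have -> : m = ((m %/ b - m %% b) * b + (m %% b) * b.+1)%N.
  rewrite {1}(divn_eq m b) mulnS mulnBl [X in (_ = _ + X)%N]addnC addnA.
  rewrite subnK //; last by rewrite leq_mul2r ltnW // orbT.
apply: powT_pos_add; [exact: powT_pos_mul | exact: powT_pos_mul].
Qed.

Lemma primitive : irreducible T -> aperiodic T ->
  exists M, (0 < M)%N /\ forall i j, 0 < (T^+M) i j.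
Proof.
move=> Hirr Hap.
have [Mf HM] := fin_all_exists (fun i => eventually_pos i Hap).
have [af Ha] : exists af : 'I_K * 'I_K -> nat, forall p, 0 < (T^+(af p)) p.1 p.2.
  have := fin_all_exists (fun p : 'I_K * 'I_K => Hirr p.1 p.2).
  by case=> f Hf; exists f.
pose M1 := (\max_i Mf i)%N.
pose A := (\max_p af p)%N.
exists (M1 + A).+1; split => // i j.
have Hij := Ha (i, j); rewrite /= in Hij.
have hA : (af (i,j) <= A)%N by exact: (@leq_bigmax _ af (i,j)).
have hM : (Mf i <= M1)%N by exact: (@leq_bigmax _ Mf i).
have -> : ((M1 + A).+1 = ((M1 + A).+1 - af (i,j)) + af (i,j))%N by lia.
apply: powT_pos_add Hij; apply: HM; lia.
Qed.
End Prim.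
Section Tele.
Variable R : realType.

Lemma tele_nat (f g : nat -> R) n :
  \prod_(m < n) f m - \prod_(m < n) g m =
  \sum_(j < n) \prod_(m < n)
     (if (m < j)%N then f m else if (m == j :> nat) then f m - g m else g m).
Proof.
elim: n => [|n IH]; first by rewrite !big_ord0 subrr.
rewrite !big_ord_recr /=.
rewrite [X in _ = X + _](eq_bigr (fun i : 'I_n => (\prod_(m < n) (if (m < i)%N then f m
   else if (m == i :> nat) then f m - g m else g m)) * g n)); last first.
  move=> i _; rewrite big_ord_recr /= [(n < i)%N]ltnNge (ltnW (ltn_ord i)) /= (gtn_eqF (ltn_ord i)) //.
rewrite -mulr_suml -IH.
rewrite ltnn eqxx.
rewrite [X in _ = _ + X * _](eq_bigr (fun i : 'I_n => f i)); last by move=> i _ /=; rewrite ?ltn_ord.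
ring.
Qed.

Lemma tele_ord N (F G : 'I_N -> R) :
  \prod_m F m - \prod_m G m =
  \sum_(n : 'I_N) \prod_(m : 'I_N) (if (m < n)%N then F m else if m == n then F m - G m else G m).
Proof.
case: N F G => [|N] F G; first by rewrite !big_ord0 subrr.
have -> : \prod_m F m = \prod_(m < N.+1) F (inord m) by apply: eq_bigr => m _; rewrite inord_val.
have -> : \prod_m G m = \prod_(m < N.+1) G (inord m) by apply: eq_bigr => m _; rewrite inord_val.
rewrite (tele_nat (fun m => F (inord m)) (fun m => G (inord m))); apply: eq_bigr => n _; apply: eq_bigr => m _.
by rewrite !inord_val.
Qed.

Lemma sq_sum_le (I : finType) (A : {pred I}) (f : I -> R) :
  (\sum_(i in A) f i) ^+ 2 <= #|A|%:R * \sum_(i in A) f i ^+ 2.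
Proof.
have H : 0 <= \sum_(i in A) \sum_(j in A) (f i - f j) ^+ 2.
  by apply: sumr_ge0 => i _; apply: sumr_ge0 => j _; apply: sqr_ge0.
have E : \sum_(i in A) \sum_(j in A) (f i - f j) ^+ 2 =
  (#|A|%:R * \sum_(i in A) f i ^+ 2) *+ 2 - ((\sum_(i in A) f i) ^+ 2) *+ 2.
  transitivity (\sum_(i in A) (#|A|%:R * f i ^+ 2 + \sum_(j in A) f j ^+ 2
                 - 2 * f i * \sum_(j in A) f j)).
    apply: eq_bigr => i _.
    transitivity (\sum_(j in A) (f i ^+ 2 + f j ^+ 2 - 2 * f i * f j)).
      by apply: eq_bigr => j _; ring.
    rewrite sumrB big_split /= sumr_const -mulr_sumr; ring.
  rewrite sumrB big_split /= sumr_const -mulr_sumr -mulr_suml -mulr_sumr.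
  move: (\sum_(i in A) f i ^+ 2) (\sum_(i in A) f i) => a b.
  rewrite -[a *+ #|A|]mulr_natl !mulr2n; ring.
move: H; rewrite E subr_ge0.
by rewrite lerMn2r.
Qed.

Lemma sq_sum_leT (I : finType) (f : I -> R) :
  (\sum_i f i) ^+ 2 <= #|I|%:R * \sum_i f i ^+ 2.
Proof. have := @sq_sum_le I (pred_of_simpl predT) f. by []. Qed.

Lemma le_maxl' (a b : R) : a <= Num.max a b.
Proof. by rewrite /Num.max; case: ltrP => h; lra. Qed.
Lemma le_maxr' (a b : R) : b <= Num.max a b.
Proof. by rewrite /Num.max; case: ltrP => h; lra. Qed.
Lemma max_le' (a b c : R) : a <= c -> b <= c -> Num.max a b <= c.
Proof. by rewrite /Num.max; case: ltrP => h; lra. Qed.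

Lemma cvS (c v S : R) : c * v = 1 -> c ^+ 2 * (v * S) = c * S.
Proof. by move=> h; rewrite expr2 -mulrA (mulrA c v) h mul1r. Qed.

End Tele.
Section Gen.
Variable R : realType.
Variable I : finType.

Definition stoch (P : I -> I -> R) :=
  (forall x y, 0 <= P x y) /\ (forall x, \sum_y P x y = 1).

Lemma powFS (P : I -> I -> R) l : powF P l.+1 = mulF P (powF P l).
Proof. by []. Qed.

Lemma powF_stoch P l : stoch P -> stoch (powF P l).
Proof.
move=> [P0 P1]; elim: l => [|l [IH0 IH1]].
  split=> [x y|x]; first by rewrite /powF /= /idF ler0n.
  rewrite /powF /= /idF (bigD1 x) //= eqxx big1 ?addr0 // => y /negbTE.
  by rewrite eq_sym => ->.
split=> [x y|x]; rewrite powFS /mulF.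
  by apply: sumr_ge0 => z _; apply: mulr_ge0.
rewrite exchange_big /=.
under eq_bigr do rewrite -mulr_sumr IH1 mulr1.
exact: P1.
Qed.

Lemma stat_pow P (pi : I -> R) l :
  (forall y, \sum_x pi x * P x y = pi y) ->
  forall y, \sum_x pi x * powF P l x y = pi y.
Proof.
move=> Hs; elim: l => [|l IH] y.
  rewrite /powF /= /idF (bigD1 y) //= eqxx mulr1 big1 ?addr0 // => x /negbTE.
  by move=> ->; rewrite mulr0.
rewrite powFS /mulF -[RHS]IH.
under eq_bigr do rewrite mulr_sumr.
rewrite exchange_big /=; apply: eq_bigr => z _.
by rewrite -Hs mulr_suml; apply: eq_bigr => x _; rewrite mulrA.
Qed.

Lemma rowdiff P Q (D : R) l : stoch P -> stoch Q ->
  (forall x, \sum_y `|P x y - Q x y| <= D) ->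
  forall x, \sum_y `|powF P l x y - powF Q l x y| <= l%:R * D.
Proof.
move=> sP [Q0 Q1] HD.
elim: l => [|l IH] x.
  rewrite mul0r; apply: le_trans (_ : \sum_(y : I) (0:R) <= 0); last by rewrite big1.
  by apply: ler_sum => y _; rewrite subrr normr0.
have [L0 L1] := powF_stoch P l sP.
rewrite !powFS /mulF.
have E : forall y, \sum_z P x z * powF P l z y - \sum_z Q x z * powF Q l z y =
  \sum_z (P x z - Q x z) * powF P l z y + \sum_z Q x z * (powF P l z y - powF Q l z y).
  move=> y; rewrite -big_split /= -sumrB; apply: eq_bigr => z _; ring.
under eq_bigr do rewrite E.
apply: le_trans; first (apply: ler_sum => y _; exact: ler_normD).
rewrite big_split /= mulrSr mulrDl mul1r [X in _ <= X]addrC.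
apply: lerD.
  apply: le_trans; first (apply: ler_sum => y _; exact: ler_norm_sum).
  rewrite exchange_big /=; apply: le_trans (HD x).
  apply: ler_sum => z _; under eq_bigr do rewrite normrM (ger0_norm (L0 _ _)).
  by rewrite -mulr_sumr L1 mulr1.
apply: le_trans; first (apply: ler_sum => y _; exact: ler_norm_sum).
rewrite exchange_big /=.
apply: le_trans (_ : \sum_z Q x z * (l%:R * D) <= _); last first.
  by rewrite -mulr_suml Q1 mul1r.
apply: ler_sum => z _; under eq_bigr do rewrite normrM (ger0_norm (Q0 _ _)).
rewrite -mulr_sumr; apply: ler_wpM2l => //; exact: IH.
Qed.

Lemma eqle (a b : R) : a = b -> a <= b. Proof. by move->. Qed.

Lemma maxpos_sub (r : R) : Num.max r 0 - Num.max (- r) 0 = r.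
Proof.
by rewrite /Num.max; case: ltrP => h1; case: ltrP => h2; lra.
Qed.
Lemma maxpos_add (r : R) : Num.max r 0 + Num.max (- r) 0 = `|r|.
Proof.
rewrite /Num.max; case: ltrP => h1; case: ltrP => h2; try lra.
all: try (rewrite ltr0_norm //; lra). all: rewrite ger0_norm //; lra.
Qed.
Lemma maxpos_ge0 (r : R) : 0 <= Num.max r 0.
Proof. by rewrite /Num.max; case: ltrP => h1; lra. Qed.

Lemma tau_bound (A : I -> I -> R) x x' :
  \sum_y `|A x y - A x' y| <= 2 * tau A.
Proof.
rewrite /tau mulrA mulfV ?mul1r ?pnatr_eq0 //.
apply: le_trans (le_bigmax _ _ x).
exact: (le_bigmax _ (fun x' => \sum_y `|A x y - A x' y|) x').
Qed.

Lemma tau_contract (A : I -> I -> R) (v : I -> R) :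
  \sum_x v x = 0 ->
  vnorm1 (fun y => \sum_x v x * A x y) <= tau A * vnorm1 v.
Proof.
move=> Hv.
pose vp x := Num.max (v x) 0; pose vm x := Num.max (- v x) 0.
have vp0 x : 0 <= vp x by apply: maxpos_ge0.
have vm0 x : 0 <= vm x by apply: maxpos_ge0.
have vE x : v x = vp x - vm x by rewrite maxpos_sub.
have nE x : `|v x| = vp x + vm x by rewrite maxpos_add.
pose s := \sum_x vp x.
have sm : \sum_x vm x = s.
  rewrite /s; apply/eqP; rewrite eq_sym -subr_eq0; apply/eqP.
  rewrite -sumrB -[RHS]Hv; apply: eq_bigr => x _; by rewrite vE.
have nv : vnorm1 v = s + s.
  by rewrite /vnorm1 -{2}sm -big_split; apply: eq_bigr => x _; rewrite nE.
have key y : s * (\sum_x v x * A x y) =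
    \sum_x \sum_x' vp x * vm x' * (A x y - A x' y).
  rewrite [RHS](eq_bigr (fun x => vp x * A x y * s - vp x * \sum_x' vm x' * A x' y)); last first.
    move=> x _; rewrite -sm !mulr_sumr -sumrB; apply: eq_bigr => x' _; ring.
  rewrite sumrB -!mulr_suml -/s.
  have -> : \sum_x v x * A x y = \sum_x vp x * A x y - \sum_x vm x * A x y.
    by rewrite -sumrB; apply: eq_bigr => x _; rewrite vE mulrBl.
  ring.
have H2 : s * vnorm1 (fun y => \sum_x v x * A x y) <= s * s * (2 * tau A).
  rewrite /vnorm1 mulr_sumr.
  apply: le_trans (_ : \sum_y \sum_x \sum_x' vp x * vm x' * `|A x y - A x' y| <= _).
    apply: ler_sum => y _.
    have s0 : 0 <= s by apply: sumr_ge0.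
    rewrite -(ger0_norm s0) -normrM key; apply: le_trans; first exact: ler_norm_sum.
    apply: ler_sum => x _; apply: le_trans; first exact: ler_norm_sum.
    apply: ler_sum => x' _; rewrite normrM ger0_norm //; exact: mulr_ge0.
  rewrite exchange_big /=.
  apply: le_trans (_ : \sum_x \sum_x' vp x * vm x' * (2 * tau A) <= _).
    apply: ler_sum => x _; rewrite exchange_big /=; apply: ler_sum => x' _.
    rewrite -mulr_sumr; apply: ler_wpM2l; first exact: mulr_ge0.
    exact: tau_bound.
  apply: eqle.
  transitivity (\sum_x vp x * s * (2 * tau A)).
    apply: eq_bigr => x _; by rewrite -mulr_suml -mulr_sumr sm.
  by rewrite -mulr_suml -mulr_suml.
have s0 : 0 <= s by apply: sumr_ge0.
case: (eqVneq s 0) => [s00|sn0].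
  have v0 : forall x, v x = 0.
    move=> x; apply/eqP; rewrite -normr_eq0; apply/eqP/le_anti/andP; split => //.
    have : vnorm1 v = 0 by rewrite nv s00 addr0.
    move/eqP; rewrite /vnorm1 psumr_eq0 => [/allP H|]; last by [].
    by rewrite (eqP (H x _)) // mem_index_enum.
  rewrite [X in X <= _](_ : _ = 0).
    by rewrite nv s00 addr0 mulr0.
  by rewrite /vnorm1 big1 // => y _; rewrite big1 ?normr0 // => x _; rewrite v0 mul0r.
have sp : 0 < s by rewrite lt_def sn0 s0.
rewrite nv; move: H2; rewrite -mulrA ler_pM2l //.
move/le_trans; apply; apply: eqle; ring.
Qed.


Lemma abs_lt_add (a b : R) : 0 < a -> 0 < b -> `|a - b| < a + b.
Proof. move=> ha hb; rewrite ltr_norml; apply/andP; split; lra. Qed.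

Lemma abs_le_add (a b : R) : 0 <= a -> 0 <= b -> `|a - b| <= a + b.
Proof. move=> ha hb; rewrite ler_norml; apply/andP; split; lra. Qed.

Lemma tau_lt1 (A : I -> I -> R) (x0 : I) : stoch A -> (forall x y, 0 < A x y) ->
  tau A < 1.
Proof.
move=> [A0 A1] Ap.
have H x x' : \sum_y `|A x y - A x' y| < 2.
  have -> : (2 : R) = \sum_y (A x y + A x' y) by rewrite big_split /= !A1.
  rewrite (bigD1 x0) //= [X in _ < X](bigD1 x0) //=.
  apply: ltr_leD; first exact: abs_lt_add.
  by apply: ler_sum => y _; apply: abs_le_add.
rewrite /tau.
have : \big[Num.max/0]_x \big[Num.max/0]_x' \sum_y `|A x y - A x' y| < 2.
  apply: bigmax_lt => // x _; apply: bigmax_lt => // x' _; exact: H.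
lra.
Qed.

Lemma perturb P Q pi1 pi2 l (D : R) : stoch P -> stoch Q ->
  stationary P pi1 -> stationary Q pi2 ->
  (forall x, \sum_y `|P x y - Q x y| <= D) ->
  vnorm1 (fun x => pi1 x - pi2 x) * (1 - tau (powF P l)) <= l%:R * D.
Proof.
move=> sP sQ [p10 [p11 p1s]] [p20 [p21 p2s]] HD.
set L := powF P l; set L' := powF Q l.
have e y : pi1 y - pi2 y = \sum_x (pi1 x - pi2 x) * L x y +
    \sum_x pi2 x * (L x y - L' x y).
  rewrite -{1}(stat_pow _ _ l p1s y) -{1}(stat_pow _ _ l p2s y) -big_split -sumrB.
  apply: eq_bigr => x _ /=; rewrite /L /L'; ring.
have sv : \sum_x (pi1 x - pi2 x) = 0 by rewrite sumrB p11 p21 subrr.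
have Hc := tau_contract L _ sv.
have H2 : \sum_y `|\sum_x pi2 x * (L x y - L' x y)| <= l%:R * D.
  apply: le_trans; first (apply: ler_sum => y _; exact: ler_norm_sum).
  rewrite exchange_big /=.
  apply: le_trans (_ : \sum_x pi2 x * (l%:R * D) <= _); last by rewrite -mulr_suml p21 mul1r.
  apply: ler_sum => x _; under eq_bigr do rewrite normrM (ger0_norm (p20 _)).
  rewrite -mulr_sumr; apply: ler_wpM2l => //; exact: rowdiff.
have H3 : vnorm1 (fun x => pi1 x - pi2 x) <= tau L * vnorm1 (fun x => pi1 x - pi2 x) + l%:R * D.
  rewrite {1}/vnorm1; under eq_bigr do rewrite e.
  apply: le_trans; first (apply: ler_sum => y _; exact: ler_normD).
  rewrite big_split /=; apply: lerD => //.
lra.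
Qed.

End Gen.
Arguments stoch {R I}.
Section Glob.
Variables (R : realType) (N K nv : nat).
Local Notation cfg := (config N K).

Definition cV (n : 'I_N) : R := (#|nbhd nv n|%:R)^-1.
Definition Qf (T : 'I_K -> 'I_K -> R) (x : cfg) n k : R :=
  cV n * \sum_(i in nbhd nv n) T (x i) k.

Lemma globalPE (T : 'M[R]_K) x y :
  globalP N nv T x y = \prod_n Qf T x n (y n).
Proof. by []. Qed.

Lemma nbhd_self (n : 'I_N) : n \in nbhd nv n.
Proof.
rewrite inE; apply/existsP.
have h : (nv < nv.*2.+1)%N by rewrite ltnS -addnn leq_addr.
by exists (Ordinal h).
Qed.

Lemma cV_mul (n : 'I_N) : cV n * #|nbhd nv n|%:R = 1.
Proof.
rewrite /cV mulVf // pnatr_eq0 -lt0n; apply/card_gt0P; exists n; exact: nbhd_self.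
Qed.

Lemma cV_ge0 (n : 'I_N) : 0 <= cV n.
Proof. by rewrite /cV invr_ge0 ler0n. Qed.

Lemma sum_prod (F : 'I_N -> 'I_K -> R) :
  \sum_(y : cfg) \prod_n F n (y n) = \prod_n \sum_k F n k.
Proof. by rewrite bigA_distr_bigA. Qed.

Lemma sum_coord (f : 'I_K -> R) (i : 'I_N) :
  \sum_(x : cfg) f (x i) = K%:R ^+ N.-1 * \sum_j f j.
Proof.
pose F m k := if m == i then f k else 1.
transitivity (\sum_(x : cfg) \prod_m F m (x m)).
  apply: eq_bigr => x _; rewrite (bigD1 i) //= /F eqxx big1 ?mulr1 //.
  by move=> m /negbTE ->.
rewrite sum_prod (bigD1 i) //= /F eqxx mulrC; congr (_ * _).
rewrite (eq_bigr (fun _ => K%:R)); last first.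
  by move=> m /negbTE ->; rewrite sumr_const card_ord.
by rewrite prodr_const cardC1 card_ord.
Qed.

Lemma avg_coord (f : 'I_K -> R) (n : 'I_N) :
  \sum_(x : cfg) cV n * \sum_(i in nbhd nv n) f (x i) = K%:R ^+ N.-1 * \sum_j f j.
Proof.
rewrite -mulr_sumr exchange_big /=; under eq_bigr do rewrite sum_coord.
by rewrite sumr_const mulrnAr -mulrnAl -[cV n *+ _]mulr_natr cV_mul mul1r.
Qed.

Lemma Qf_ge0 T (x : cfg) (n : 'I_N) k : (forall j k, 0 <= T j k) -> 0 <= Qf T x n k.
Proof.
move=> H; apply: mulr_ge0; first exact: cV_ge0.
by apply: sumr_ge0.
Qed.

Lemma Qf_sum (T : 'M[R]_K) (x : cfg) (n : 'I_N) : row_stochastic T -> \sum_k Qf T x n k = 1.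
Proof.
move=> [_ H]; rewrite /Qf -mulr_sumr exchange_big /=.
under eq_bigr do rewrite H.
by rewrite sumr_const cV_mul.
Qed.

Lemma globalP_stoch (T : 'M[R]_K) : row_stochastic T -> stoch (globalP N nv T).
Proof.
move=> hT; split => [x y|x].
  rewrite globalPE; apply: prodr_ge0 => n _; apply: Qf_ge0; by case: hT.
under eq_bigr do rewrite globalPE.
by rewrite sum_prod big1 // => n _; apply: Qf_sum.
Qed.

Lemma dQ_E (T1 T2 : 'I_K -> 'I_K -> R) (x : cfg) (n : 'I_N) k :
  Qf T1 x n k - Qf T2 x n k = cV n * \sum_(i in nbhd nv n) (T1 (x i) k - T2 (x i) k).
Proof. by rewrite /Qf -mulrBr -sumrB. Qed.

Definition gfun (T1 T2 : 'I_K -> 'I_K -> R) (x : cfg) (n m : 'I_N) k :=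
  if (m < n)%N then Qf T1 x m k
  else if m == n then Qf T1 x m k - Qf T2 x m k else Qf T2 x m k.

Lemma dP_tele (T1 T2 : 'M[R]_K) (x y : cfg) :
  globalP N nv T1 x y - globalP N nv T2 x y =
  \sum_n \prod_m gfun T1 T2 x n m (y m).
Proof. by rewrite !globalPE tele_ord. Qed.


Lemma gsum_abs (T1 T2 : 'M[R]_K) (x : cfg) (n : 'I_N) :
  row_stochastic T1 -> row_stochastic T2 ->
  \prod_m \sum_k `|gfun T1 T2 x n m k| = \sum_k `|Qf T1 x n k - Qf T2 x n k|.
Proof.
move=> h1 h2; rewrite (bigD1 n) //= [X in _ * X]big1 ?mulr1.
  by apply: eq_bigr => k _; rewrite /gfun ltnn eqxx.
move=> m mn; rewrite /gfun (negbTE mn); case: (m < n)%N => /=.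
  rewrite (eq_bigr (Qf T1 x m)); first exact: Qf_sum.
  move=> k _; rewrite ger0_norm //; apply: Qf_ge0; by case: h1.
rewrite (eq_bigr (Qf T2 x m)); first exact: Qf_sum.
move=> k _; rewrite ger0_norm //; apply: Qf_ge0; by case: h2.
Qed.

Lemma row_l1 (T1 T2 : 'M[R]_K) (x : cfg) :
  row_stochastic T1 -> row_stochastic T2 ->
  \sum_y `|globalP N nv T1 x y - globalP N nv T2 x y| <=
  \sum_n \sum_k `|Qf T1 x n k - Qf T2 x n k|.
Proof.
move=> h1 h2; under eq_bigr do rewrite dP_tele.
apply: le_trans; first (apply: ler_sum => y _; exact: ler_norm_sum).
rewrite exchange_big /=; apply: eqle; apply: eq_bigr => n _.
under eq_bigr do rewrite normr_prod.
rewrite (sum_prod (fun m k => `|gfun T1 T2 x n m k|)).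
exact: gsum_abs.
Qed.

Lemma dQ_l1 (T1 T2 : 'I_K -> 'I_K -> R) (x : cfg) (n : 'I_N) :
  \sum_k `|Qf T1 x n k - Qf T2 x n k| <=
  cV n * \sum_(i in nbhd nv n) \sum_k `|T1 (x i) k - T2 (x i) k|.
Proof.
under eq_bigr do rewrite dQ_E normrM (ger0_norm (cV_ge0 n)).
rewrite -mulr_sumr; apply: ler_wpM2l; first exact: cV_ge0.
rewrite exchange_big /=; apply: ler_sum => k _; exact: ler_norm_sum.
Qed.

Lemma norm1_bound (T1 T2 : 'M[R]_K) :
  row_stochastic T1 -> row_stochastic T2 ->
  norm1 (fun x y => globalP N nv T1 x y - globalP N nv T2 x y) <=
  N%:R * K%:R ^+ N.-1 * norm1 (fun j k => T1 j k - T2 j k).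
Proof.
move=> h1 h2; rewrite /norm1.
apply: le_trans; first (apply: ler_sum => x _; exact: row_l1).
apply: le_trans; first (apply: ler_sum => x _; apply: ler_sum => n _; exact: dQ_l1).
rewrite exchange_big /=; apply: eqle.
under eq_bigr do rewrite (avg_coord (fun j => \sum_k `|T1 j k - T2 j k|)).
by rewrite sumr_const card_ord -[_ *+ N]mulr_natl mulrA.
Qed.


Lemma rowsq_ge (T : 'M[R]_K) j : \sum_k T j k ^+ 2 <= rowsq T.
Proof. exact: (le_bigmax 0 (fun j => \sum_k T j k ^+ 2) j). Qed.

Lemma sq_avg (M : 'I_K -> 'I_K -> R) (x : cfg) (n : 'I_N) :
  \sum_k (cV n * \sum_(i in nbhd nv n) M (x i) k) ^+ 2 <=
  cV n * \sum_(i in nbhd nv n) \sum_k M (x i) k ^+ 2.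
Proof.
apply: le_trans (_ : \sum_k cV n * \sum_(i in nbhd nv n) M (x i) k ^+ 2 <= _).
  apply: ler_sum => k _; rewrite exprMn.
  apply: le_trans; first (apply: ler_wpM2l; [exact: sqr_ge0 | exact: sq_sum_le]).
  apply: eqle; apply: cvS; exact: cV_mul.
by rewrite -mulr_sumr exchange_big.
Qed.

Lemma Qsq (T : 'M[R]_K) (x : cfg) (n : 'I_N) :
  \sum_k Qf T x n k ^+ 2 <= rowsq T.
Proof.
apply: le_trans; first exact: sq_avg.
apply: le_trans (_ : cV n * \sum_(i in nbhd nv n) rowsq T <= _).
  apply: ler_wpM2l; first exact: cV_ge0.
  apply: ler_sum => i _; exact: rowsq_ge.
by rewrite sumr_const mulrnAr -mulrnAl -[cV n *+ _]mulr_natr cV_mul mul1r.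
Qed.

Lemma gsum_sq (T1 T2 : 'M[R]_K) (x : cfg) (n : 'I_N) (CK : R) :
  rowsq T1 <= CK -> rowsq T2 <= CK -> 0 <= CK ->
  \sum_(y : cfg) (\prod_m gfun T1 T2 x n m (y m)) ^+ 2 <=
  CK ^+ N.-1 * \sum_k (Qf T1 x n k - Qf T2 x n k) ^+ 2.
Proof.
move=> h1 h2 h0.
under eq_bigr do rewrite -prodrXl.
rewrite (sum_prod (fun m k => gfun T1 T2 x n m k ^+ 2)).
apply: le_trans (_ : \prod_m (if m == n then \sum_k (Qf T1 x n k - Qf T2 x n k) ^+ 2
   else CK) <= _).
  apply: ler_prod => m _; apply/andP; split.
    by apply: sumr_ge0 => k _; apply: sqr_ge0.
  have [->|mn] := eqVneq m n.
    by apply: eqle; apply: eq_bigr => k _; rewrite /gfun ltnn eqxx.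
  rewrite /gfun (negbTE mn); case: (m < n)%N => /=.
    exact: le_trans (Qsq _ _ _) h1.
  exact: le_trans (Qsq _ _ _) h2.
rewrite (bigD1 n) //= eqxx [X in _ * X](eq_bigr (fun _ => CK)); last first.
  by move=> m /negbTE ->.
by rewrite prodr_const cardC1 card_ord mulrC.
Qed.

Lemma row_l2 (T1 T2 : 'M[R]_K) (x : cfg) (CK : R) :
  rowsq T1 <= CK -> rowsq T2 <= CK -> 0 <= CK ->
  \sum_y (globalP N nv T1 x y - globalP N nv T2 x y) ^+ 2 <=
  N%:R * (CK ^+ N.-1 * \sum_n \sum_k (Qf T1 x n k - Qf T2 x n k) ^+ 2).
Proof.
move=> h1 h2 h0; under eq_bigr do rewrite dP_tele.
apply: le_trans; first (apply: ler_sum => y _; exact: sq_sum_leT).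
rewrite card_ord -mulr_sumr; apply: ler_wpM2l; first exact: ler0n.
rewrite exchange_big /= mulr_sumr; apply: ler_sum => n _.
exact: gsum_sq.
Qed.

Lemma norm2_sq_bound (T1 T2 : 'M[R]_K) (CK : R) :
  rowsq T1 <= CK -> rowsq T2 <= CK -> 0 <= CK ->
  \sum_(x : cfg) \sum_(y : cfg) (globalP N nv T1 x y - globalP N nv T2 x y) ^+ 2 <=
  N%:R * (CK ^+ N.-1 * (N%:R * (K%:R ^+ N.-1 *
     \sum_j \sum_k (T1 j k - T2 j k) ^+ 2))).
Proof.
move=> h1 h2 h0.
apply: le_trans (_ : \sum_(x : cfg) N%:R * (CK ^+ N.-1 *
   \sum_n \sum_k (Qf T1 x n k - Qf T2 x n k) ^+ 2) <= _).
  by apply: ler_sum => x _; apply: row_l2.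
rewrite -mulr_sumr; apply: ler_wpM2l; first exact: ler0n.
rewrite -mulr_sumr; apply: ler_wpM2l; first exact: exprn_ge0.
apply: le_trans (_ : \sum_(x : cfg) \sum_n cV n * \sum_(i in nbhd nv n)
    \sum_k (T1 (x i) k - T2 (x i) k) ^+ 2 <= _).
  apply: ler_sum => x _; apply: ler_sum => n _.
  under eq_bigr do rewrite dQ_E.
  exact: (sq_avg (fun j k => T1 j k - T2 j k)).
rewrite exchange_big /=; apply: eqle.
under eq_bigr do rewrite (avg_coord (fun j => \sum_k (T1 j k - T2 j k) ^+ 2)).
by rewrite sumr_const card_ord -[_ *+ N]mulr_natl.
Qed.

End Glob.
Section Fin.
Variable R : realType.

Lemma norm11_ge (I J : finType) (A : I -> J -> R) (i0 : I) :
  \sum_j `|A i0 j| <= norm11 A.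
Proof.
set E := [set vnorm1 (fun j => \sum_i phi i * A i j)
      | phi in [set phi : I -> R | vnorm1 phi <= 1]]%classic.
have key : E (\sum_j `|A i0 j|).
  exists (fun i => (i == i0)%:R).
    rewrite /= /vnorm1 (bigD1 i0) //= eqxx normr1 big1 ?addr0 //.
    by move=> i /negbTE ->; rewrite normr0.
  rewrite /vnorm1; apply: eq_bigr => j _.
  rewrite (bigD1 i0) //= eqxx mul1r big1 ?addr0 //.
  by move=> i /negbTE ->; rewrite mul0r.
have hE : has_sup E.
  split; first by exists (\sum_j `|A i0 j|).
  exists (norm1 A) => y [phi hphi <-].
  rewrite /vnorm1 /norm1 exchange_big /=.
  apply: ler_sum => j _; apply: le_trans; first exact: ler_norm_sum.
  apply: ler_sum => i _; rewrite normrM -[X in _ <= X]mul1r.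
  apply: ler_wpM2r => //; apply: le_trans hphi.
  exact: (@sum_ge_term R _ (fun i => `|phi i|) i).
exact: sup_upper_bound hE _ key.
Qed.

Lemma norm1_le_norm11 (K : nat) (A : 'I_K -> 'I_K -> R) :
  norm1 A <= K%:R * norm11 A.
Proof.
rewrite /norm1; apply: le_trans (_ : \sum_(j : 'I_K) norm11 A <= _).
  by apply: ler_sum => j _; exact: norm11_ge.
by rewrite sumr_const card_ord mulr_natl.
Qed.

Lemma exists_pos (I : finType) (F : I -> R) :
  0 < \sum_i F i -> exists i, 0 < F i.
Proof.
move=> H; apply: contrapT => hn.
have : \sum_i F i <= 0.
  apply: sumr_le0 => i _; rewrite leNgt; apply/negP => hi; apply: hn; by exists i.
by rewrite leNgt H.
Qed.

Lemma mul_pos_l (a b : R) : 0 <= a -> 0 < a * b -> 0 < a.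
Proof.
move=> ha H; rewrite lt_def ha andbT; apply/eqP => e.
by rewrite e mul0r ltxx in H.
Qed.

Lemma mul_pos_r (a b : R) : 0 <= b -> 0 < a * b -> 0 < b.
Proof. by move=> hb; rewrite mulrC; apply: mul_pos_l. Qed.

Lemma powF_pos (N K nv : nat) (T : 'M[R]_K) l (x y : config N K) :
  row_stochastic T ->
  (forall n, 0 < (T ^+ l) (x n) (y n)) -> 0 < powF (globalP N nv T) l x y.
Proof.
move=> hT; have [Tnn _] := hT.
have [P0 _] := @globalP_stoch R N K nv T hT.
elim: l x y => [|l IH] x y H.
  have -> : x = y.
    apply/ffunP => n; have := H n; rewrite expr0 mx1E.
    by case: eqP => // _; rewrite ltxx.
  by rewrite /powF /= /idF eqxx ltr01.
have hk n : exists k, 0 < T (x n) k /\ 0 < (T ^+ l) k (y n).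
  have := H n; rewrite exprS mx_mulE => /exists_pos [k hk].
  exists k; split.
    exact: mul_pos_l (Tnn _ _) hk.
  exact: mul_pos_r (@powT_ge0 _ _ T Tnn _ _ _) hk.
have [f hf] := fin_all_exists hk.
pose z := [ffun n => f n] : config N K.
have [L0 _] := @powF_stoch R _ (globalP N nv T) l (@globalP_stoch R N K nv T hT).
rewrite powFS /mulF.
apply: lt_le_trans (@sum_ge_term R _ (fun z => globalP N nv T x z * powF (globalP N nv T) l z y) z _); last first.
  by move=> w; apply: mulr_ge0.
apply: mulr_gt0; last first.
  apply: IH => n; rewrite ffunE; by case: (hf n).
rewrite globalPE; apply: prodr_gt0 => n _; rewrite ffunE.
rewrite /Qf; apply: mulr_gt0.
  by rewrite /cV invr_gt0 ltr0n; apply/card_gt0P; exists n; exact: nbhd_self.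
case: (hf n) => hpos _.
apply: (lt_le_trans hpos); rewrite (bigD1 n) ?nbhd_self //= lerDl.
by apply: sumr_ge0 => i _.
Qed.

End Fin.
Lemma sqrt_pow (R : realType) (a : R) n : 0 <= a -> Num.sqrt a ^+ n = Num.sqrt (a ^+ n).
Proof.
move=> a0; elim: n => [|n IH]; first by rewrite !expr0 sqrtr1.
by rewrite !exprS IH (@sqrtrM _ a (a ^+ n) a0).
Qed.

Lemma pow_pred_le (R : realType) (a : R) n : 1 <= a -> a ^+ n.-1 <= a ^+ n.
Proof.
move=> a1; case: n => [|n] //=.
by rewrite exprS ler_peMl // exprn_ge0 // (le_trans ler01 a1).
Qed.

Lemma rowsq_le1 (R : realType) (K : nat) (T : 'M[R]_K) :
  row_stochastic T -> rowsq T <= 1.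
Proof.
move=> [h0 h1]; apply: bigmax_le => [|j _]; first exact: ler01.
rewrite -(h1 j); apply: ler_sum => k _.
have Tle1 : T j k <= 1 by rewrite -(h1 j); exact: (@sum_ge_term R _ (fun k => T j k) k).
by rewrite expr2 -[X in _ <= X]mulr1; apply: ler_wpM2l.
Qed.

Theorem theorem3p5 (R : realType) (N K nv : nat)
  (T1 T2 : 'M[R]_K) (pi1 pi2 : config N K -> R) :
  (1 <= N)%N -> (1 <= K)%N ->
  row_stochastic T1 -> irreducible T1 -> aperiodic T1 ->
  row_stochastic T2 -> irreducible T2 -> aperiodic T2 ->
  stationary (globalP N nv T1) pi1 -> stationary (globalP N nv T2) pi2 ->
  let P1 := globalP N nv T1 in
  let P2 := globalP N nv T2 in
  let dP := fun x y => P1 x y - P2 x y in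
  let dT := fun j k => T1 j k - T2 j k in
  let CK := Num.max (rowsq T1) (rowsq T2) in
  let bnd := (N * K ^ N.-1)%:R * Num.min (norm1 dT) (K%:R * norm11 dT) in
  [/\ norm1 dP <= bnd,
      norm2 dP <= N%:R * Num.sqrt (K%:R * CK) ^+ N * norm2 dT,
      CK <= 1 &
      exists l0 : nat, [/\ (0 < l0)%N, tau (powF P1 l0) < 1 &
        let c := (1 + (l0.-1 * K ^ N)%:R) / (1 - tau (powF P1 l0)) in
        vnorm1 (fun x => pi1 x - pi2 x) <= c * norm1 dP /\
        c * norm1 dP <= c * bnd]].
Proof.
move=> N1 K1 hT1 irr1 ap1 hT2 irr2 ap2 st1 st2 P1 P2 dP dT CK bnd.
have [T1nn T1row] := hT1; have [T2nn T2row] := hT2.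
pose j0 : 'I_K := Ordinal K1.
have hn1 : norm1 dP <= N%:R * K%:R ^+ N.-1 * norm1 dT :=
  @norm1_bound R N K nv T1 T2 hT1 hT2.
have hn11 : norm1 dT <= K%:R * norm11 dT := @norm1_le_norm11 R K dT.
have part1 : norm1 dP <= bnd.
  rewrite /bnd natrM natrX.
  have c0 : 0 <= N%:R * K%:R ^+ N.-1 :> R by apply: mulr_ge0 => //; apply: exprn_ge0.
  rewrite /Num.min; case: ltrP => _; first exact: hn1.
  by apply: le_trans hn1 _; apply: ler_wpM2l.
have rs1 : rowsq T1 <= CK := @le_maxl' R _ _.
have rs2 : rowsq T2 <= CK := @le_maxr' R _ _.
have r1 : \sum_k T1 j0 k ^+ 2 <= CK := le_trans (@rowsq_ge R K T1 j0) rs1.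
have CK0 : 0 <= CK.
  by apply: le_trans r1; apply: sumr_ge0 => k _; apply: sqr_ge0.
have part3 : CK <= 1 by apply: max_le'; apply: rowsq_le1.
have a1 : 1 <= K%:R * CK.
  have := @sq_sum_leT R _ (fun k => T1 j0 k); rewrite T1row expr1n card_ord => h.
  by apply: le_trans h _; apply: ler_wpM2l.
have part2 : norm2 dP <= N%:R * Num.sqrt (K%:R * CK) ^+ N * norm2 dT.
  have hX := @norm2_sq_bound R N K nv T1 T2 CK rs1 rs2 CK0.
  rewrite /norm2 /dP /dT /P1 /P2 /=.
  move: hX; set S2 := \sum_j \sum_k (T1 j k - T2 j k) ^+ 2; move=> hX.
  have S20 : 0 <= S2 by apply: sumr_ge0 => j _; apply: sumr_ge0 => k _; apply: sqr_ge0.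
  set a := K%:R * CK.
  have a0 : 0 <= a by apply: le_trans a1.
  have sqX : forall n, Num.sqrt a ^+ n = Num.sqrt (a ^+ n).
    by move=> n; apply: sqrt_pow.
  rewrite [X in _ <= X](_ : _ = Num.sqrt (N%:R ^+ 2 * a ^+ N * S2)); last first.
    rewrite sqX sqrtrM; last by apply: mulr_ge0; [apply: sqr_ge0 | apply: exprn_ge0].
    by rewrite sqrtrM ?sqr_ge0 // sqrtr_sqr normr_nat.
  rewrite ler_sqrt; last by apply: mulr_ge0 => //; apply: mulr_ge0; [apply: sqr_ge0 | apply: exprn_ge0].
  apply: le_trans hX _.
  have ha : a ^+ N.-1 <= a ^+ N.
    exact: pow_pred_le.
  apply: le_trans (_ : N%:R ^+ 2 * a ^+ N.-1 * S2 <= _).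
    by apply: eqle; rewrite /a exprMn; ring.
  apply: ler_wpM2r => //; apply: ler_wpM2l => //; apply: sqr_ge0.
split => //.
have [M [M0 HM]] := @primitive R K T1 T1nn irr1 ap1.
pose x0 : config N K := [ffun _ => j0].
have sP1 := @globalP_stoch R N K nv T1 hT1.
have sP2 := @globalP_stoch R N K nv T2 hT2.
have Lpos : forall x y, 0 < powF P1 M x y.
  by move=> x y; apply: (@powF_pos R N K nv T1 M x y hT1) => n; apply: HM.
have htau : tau (powF P1 M) < 1.
  exact: (@tau_lt1 R _ (powF P1 M) x0 (@powF_stoch R _ P1 M sP1) Lpos).
exists M; split => //.
move=> c; rewrite /c.
have hrow : forall x, \sum_y `|P1 x y - P2 x y| <= norm1 dP.
  move=> x; exact: (@sum_ge_term R _ (fun x => \sum_y `|P1 x y - P2 x y|) x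
     (fun x => sumr_ge0 _ (fun y _ => normr_ge0 _))).
have hp := @perturb R _ P1 P2 pi1 pi2 M (norm1 dP) sP1 sP2 st1 st2 hrow.
have D0 : 0 <= norm1 dP by apply: sumr_ge0 => x _; apply: sumr_ge0.
have t1 : 0 < 1 - tau (powF P1 M) by rewrite subr_gt0.
have Ma : M%:R <= 1 + (M.-1 * K ^ N)%:R :> R.
  have hM : (M <= 1 + M.-1 * K ^ N)%N.
    have hp' : (0 < K ^ N)%N by rewrite expn_gt0 K1.
    apply: (@leq_trans (1 + M.-1)%N); first by rewrite add1n prednK.
    by rewrite leq_add2l leq_pmulr.
  have : (M%:R : R) <= (1 + M.-1 * K ^ N)%:R by rewrite ler_nat.
  by rewrite natrD mulr1n.
split.
  rewrite mulrAC ler_pdivlMr //; apply: le_trans hp _.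
  by apply: ler_wpM2r.
apply: ler_wpM2l => //; apply: divr_ge0; last exact: ltW.
by apply: addr_ge0 => //; apply: ler0n.
Qed.
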